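(* Let $g:(1/\sqrt2,1)\to\mathbb{R}$, $g(q)=8(2\mathrm{E}(q)-\mathrm{K}(q))^2(2q^2-1)$. Then for $q\in(1/\sqrt2,1)$, $$g'(q)=\frac{16}{q(1-q^2)}\big(2\mathrm{E}(q)-\mathrm{K}(q)\big)f(q).$$ In addition, $g$ has exactly two local extrema, at $\hat q\approx0.79257$ and $q_*\approx0.90891$: $g(\hat q)=:\hat\lambda\approx0.70107$ is the unique local maximum, $g(q_* )=0$ is a local minimum, and $g$ is strictly monotone on each of $(1/\sqrt2,\hat q]$, $[\hat q,q_*]$ and $[q_*,1)$.
   Context: For $q\in[0,1)$, $\mathrm{K}(q)=\int_0^{\pi/2}(1-q^2\sin^2\theta)^{-1/2}\,d\theta$ and $\mathrm{E}(q)=\int_0^{\pi/2}(1-q^2\sin^2\theta)^{1/2}\,d\theta$. The function $q\mapsto2\mathrm{E}(q)-\mathrm{K}(q)$ is strictly decreasing on $[0,1)$ and $q_*\in(0,1)$ is its unique zero. $f(q)=(4q^4-5q^2+1)\mathrm{K}(q)+(-8q^4+8q^2-1)\mathrm{E}(q)$ on $[1/\sqrt2,1)$, and $\hat q$ denotes the unique zero of $f$ in $[1/\sqrt2,1)$, which lies in $(1/\sqrt2,q_* )$, with $f>0$ on $[1/\sqrt2,\hat q)$ and $f<0$ on $(\hat q,1)$. *)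

(* Defs.v *)
From Stdlib Require Import Reals.
From Coquelicot Require Import Coquelicot.
Open Scope R_scope.

Definition ellK (q : R) : R :=
  RInt (fun t => / sqrt (1 - q ^ 2 * (sin t) ^ 2)) 0 (PI / 2).
Definition ellE (q : R) : R :=
  RInt (fun t => sqrt (1 - q ^ 2 * (sin t) ^ 2)) 0 (PI / 2).

Definition fK (q : R) : R :=
  (4 * q ^ 4 - 5 * q ^ 2 + 1) * ellK q + (- 8 * q ^ 4 + 8 * q ^ 2 - 1) * ellE q.

Definition gK (q : R) : R :=
  8 * (2 * ellE q - ellK q) ^ 2 * (2 * q ^ 2 - 1).

Definition domg (x : R) : Prop := / sqrt 2 < x < 1.

Definition is_local_max (D : R -> Prop) (h : R -> R) (x : R) : Prop :=
  D x /\ exists d : R, 0 < d /\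
    forall y, D y -> Rabs (y - x) < d -> h y <= h x.
Definition is_local_min (D : R -> Prop) (h : R -> R) (x : R) : Prop :=
  D x /\ exists d : R, 0 < d /\
    forall y, D y -> Rabs (y - x) < d -> h x <= h y.

Definition strictly_monotone_on (I : R -> Prop) (h : R -> R) : Prop :=
  (forall x y, I x -> I y -> x < y -> h x < h y) \/
  (forall x y, I x -> I y -> x < y -> h y < h x).

(* Main.v *)
Require Import Defs.
From Stdlib Require Import Reals Lra Psatz.
From Coquelicot Require Import Coquelicot.
Open Scope R_scope.

Lemma Dpos u t : -1 < u < 1 -> 0 < 1 - u^2 * sin t ^2.
Proof.
  intros Hu. pose proof (SIN_bound t).
  assert (0 <= sin t ^2 <= 1) by nra. assert (u^2 < 1) by nra. nra.
Qed.

Lemma c2_sin x y : continuity_2d_pt (fun _ v => sin v) x y.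
Proof.
  apply (continuity_1d_2d_pt_comp sin (fun _ v => v)).
  apply continuity_sin. apply continuity_2d_pt_id2.
Qed.

Lemma c2_sqrt f x y : continuity_2d_pt f x y -> 0 < f x y ->
  continuity_2d_pt (fun u v => sqrt (f u v)) x y.
Proof.
  intros H1 H2. apply (continuity_1d_2d_pt_comp sqrt f); auto.
  apply continuity_pt_sqrt; lra.
Qed.

Lemma c2_pow2 f x y : continuity_2d_pt f x y ->
  continuity_2d_pt (fun u v => f u v ^ 2) x y.
Proof.
  intros H. apply continuity_2d_pt_ext with (fun u v => f u v * f u v).
  intros; ring. now apply continuity_2d_pt_mult.
Qed.

Lemma c2_D x y : continuity_2d_pt (fun u v => 1 - u^2 * sin v ^2) x y.
Proof.
  apply continuity_2d_pt_minus. apply continuity_2d_pt_const.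
  apply continuity_2d_pt_mult; apply c2_pow2.
  apply continuity_2d_pt_id1. apply c2_sin.
Qed.

Lemma param (F dF : R -> R -> R) (q v : R) :
  0 < q < 1 ->
  (forall u t, -1 < u < 1 -> is_derive (fun z => F z t) u (dF u t)) ->
  (forall u t, -1 < u < 1 -> continuity_2d_pt dF u t) ->
  (forall u, -1 < u < 1 -> ex_RInt (F u) 0 (PI/2)) ->
  is_RInt (dF q) 0 (PI/2) v ->
  is_derive (fun u => RInt (F u) 0 (PI/2)) q v.
Proof.
  intros Hq Hd Hc Hi Hv.
  assert (He : 0 < 1 - q) by lra.
  assert (Hl : locally q (fun y => -1 < y < 1)).
  { exists (mkposreal _ He). intros y Hy.
    change (Rabs (y - q) < 1 - q) in Hy. apply Rabs_def2 in Hy. lra. }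
  replace v with (RInt (fun t => Derive (fun u => F u t) q) 0 (PI/2)).
  - apply (is_derive_RInt_param F 0 (PI/2) q).
    + apply filter_imp with (2 := Hl). intros y Hy t _. eexists; now apply Hd.
    + intros t _. apply continuity_2d_pt_ext_loc with dF; [|apply Hc; lra].
      exists (mkposreal _ He). intros u w Hu _. simpl in Hu.
      apply Rabs_def2 in Hu. symmetry. apply is_derive_unique, Hd. lra.
    + apply filter_imp with (2 := Hl). intros y Hy. now apply Hi.
  - apply is_RInt_unique. apply is_RInt_ext with (dF q); auto.
    intros t _. symmetry. apply is_derive_unique, Hd. lra.
Qed.

Lemma exK u : -1 < u < 1 -> ex_RInt (fun t => / sqrt (1 - u^2 * sin t^2)) 0 (PI/2).
Proof.
  intros Hu. apply (@ex_RInt_continuous R_CompleteNormedModule). intros z _.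
  apply (@ex_derive_continuous R_AbsRing R_NormedModule). pose proof (Dpos u z Hu). auto_derive.
  simpl in H |- *. split; [lra|]. split; auto.
  apply Rgt_not_eq, sqrt_lt_R0. lra.
Qed.

Lemma exE u : -1 < u < 1 -> ex_RInt (fun t => sqrt (1 - u^2 * sin t^2)) 0 (PI/2).
Proof.
  intros Hu. apply (@ex_RInt_continuous R_CompleteNormedModule). intros z _.
  apply (@ex_derive_continuous R_AbsRing R_NormedModule). pose proof (Dpos u z Hu). auto_derive.
  simpl in H |- *. lra.
Qed.

Ltac fixD u t := replace (1 + - (u * (u * 1) * (sin t * (sin t * 1)))) with (1 - u^2 * sin t^2) by ring.

Lemma dK_is u t : -1 < u < 1 -> is_derive (fun z => / sqrt (1 - z^2 * sin t^2)) u
   (u * sin t ^2 / ((1 - u^2 * sin t^2) * sqrt (1 - u^2 * sin t^2))).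
Proof.
  intros Hu. pose proof (Dpos u t Hu) as HD.
  pose proof (sqrt_lt_R0 _ HD) as HS. pose proof (sqrt_sqrt _ (Rlt_le _ _ HD)) as HSS.
  auto_derive; fixD u t.
  - split; [lra|]. split; auto. lra.
  - set (S := sqrt (1 - u^2 * sin t^2)) in *.
    rewrite <- HSS. field. lra.
Qed.

Lemma dE_is u t : -1 < u < 1 -> is_derive (fun z => sqrt (1 - z^2 * sin t^2)) u
   (- (u * sin t ^2) / sqrt (1 - u^2 * sin t^2)).
Proof.
  intros Hu. pose proof (Dpos u t Hu) as HD.
  pose proof (sqrt_lt_R0 _ HD) as HS.
  auto_derive; fixD u t.
  - lra.
  - set (S := sqrt (1 - u^2 * sin t^2)) in *. field. lra.
Qed.

Lemma dK_c u t : -1 < u < 1 -> continuity_2d_pt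
  (fun u t => u * sin t ^2 / ((1 - u^2 * sin t^2) * sqrt (1 - u^2 * sin t^2))) u t.
Proof.
  intros Hu. pose proof (Dpos u t Hu) as HD. pose proof (sqrt_lt_R0 _ HD) as HS.
  apply continuity_2d_pt_mult.
  - apply continuity_2d_pt_mult. apply continuity_2d_pt_id1. apply c2_pow2, c2_sin.
  - apply continuity_2d_pt_inv.
    + apply continuity_2d_pt_mult. apply c2_D. apply c2_sqrt. apply c2_D. auto.
    + apply Rgt_not_eq. apply Rmult_lt_0_compat; auto.
Qed.

Lemma dE_c u t : -1 < u < 1 -> continuity_2d_pt
  (fun u t => - (u * sin t ^2) / sqrt (1 - u^2 * sin t^2)) u t.
Proof.
  intros Hu. pose proof (Dpos u t Hu) as HD. pose proof (sqrt_lt_R0 _ HD) as HS.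
  apply continuity_2d_pt_mult.
  - apply continuity_2d_pt_opp.
    apply continuity_2d_pt_mult. apply continuity_2d_pt_id1. apply c2_pow2, c2_sin.
  - apply continuity_2d_pt_inv.
    + apply c2_sqrt. apply c2_D. auto.
    + apply Rgt_not_eq. auto.
Qed.

Ltac toR := match goal with |- ?a = ?b => change (@eq R a b) end.

Lemma isE q : -1 < q < 1 -> is_RInt (fun t => sqrt (1 - q^2 * sin t^2)) 0 (PI/2) (ellE q).
Proof. intros. apply (RInt_correct (V:=R_CompleteNormedModule)). now apply exE. Qed.
Lemma isK q : -1 < q < 1 -> is_RInt (fun t => / sqrt (1 - q^2 * sin t^2)) 0 (PI/2) (ellK q).
Proof. intros. apply (RInt_correct (V:=R_CompleteNormedModule)). now apply exK. Qed.

Lemma lin2 (f g : R -> R) a b (If Ig : R) :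
  is_RInt f 0 (PI/2) If -> is_RInt g 0 (PI/2) Ig ->
  is_RInt (fun t => a * f t + b * g t) 0 (PI/2) (a * If + b * Ig).
Proof.
  intros Hf Hg.
  apply (is_RInt_plus (V:=R_NormedModule) (fun t => a * f t) (fun t => b * g t)).
  - apply (is_RInt_scal (V:=R_NormedModule) f). auto.
  - apply (is_RInt_scal (V:=R_NormedModule) g). auto.
Qed.

Lemma derE q : 0 < q < 1 -> is_derive ellE q ((ellE q - ellK q) / q).
Proof.
  intros Hq. unfold ellE at 1.
  apply (param (fun u t => sqrt (1 - u^2 * sin t^2))
           (fun u t => - (u * sin t ^2) / sqrt (1 - u^2 * sin t^2))); auto.
  - intros; now apply dE_is.
  - intros; now apply dE_c.
  - intros; now apply exE.
  - replace ((ellE q - ellK q) / q) with (/q * ellE q + (- / q) * ellK q) by (field; lra).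
    apply is_RInt_ext with (fun t => /q * sqrt (1 - q^2 * sin t^2) + (- /q) * / sqrt (1 - q^2 * sin t^2)).
    + intros t _. pose proof (Dpos q t ltac:(lra)) as HD.
      pose proof (sqrt_lt_R0 _ HD) as HS. pose proof (sqrt_sqrt _ (Rlt_le _ _ HD)) as HSS.
      set (S := sqrt (1 - q^2 * sin t^2)) in *.
      replace (/ q * S) with (/ q * (S * S) / S) by (field; lra).
      rewrite HSS. toR. field. lra.
    + apply lin2; [apply isE|apply isK]; lra.
Qed.

Lemma idK q s co S : 0 < q < 1 -> 0 < S -> S * S = 1 - q^2 * s^2 -> co^2 = 1 - s^2 ->
  0 < 1 - q^2 * s^2 ->
  q * s^2 / ((1 - q^2 * s^2) * S) =
  / (q * (1 - q^2)) * S + (- / q) * / S +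
  (- q / (1 - q^2)) * (((co^2 - s^2) * (1 - q^2 * s^2) + q^2 * s^2 * co^2) / ((1 - q^2 * s^2) * S)).
Proof.
  intros Hq HS HSS Hco HD.
  replace (/ (q * (1 - q^2)) * S) with (/ (q * (1 - q^2)) * (S * S) / S)
    by (field; repeat split; nra).
  rewrite HSS, Hco. field. repeat split; nra.
Qed.

Definition phi q t := sin t * cos t / sqrt (1 - q^2 * sin t^2).
Definition dphi q t := ((cos t ^2 - sin t ^2) * (1 - q^2 * sin t^2) + q^2 * sin t^2 * cos t^2)
   / ((1 - q^2 * sin t^2) * sqrt (1 - q^2 * sin t^2)).

Lemma phi_d q t : -1 < q < 1 -> is_derive (phi q) t (dphi q t).
Proof.
  intros Hq. pose proof (Dpos q t Hq) as HD.
  pose proof (sqrt_lt_R0 _ HD) as HS. pose proof (sqrt_sqrt _ (Rlt_le _ _ HD)) as HSS.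
  unfold phi, dphi. auto_derive; fixD q t.
  - split; [lra|]. split; auto. lra.
  - set (S := sqrt (1 - q^2 * sin t^2)) in *.
    rewrite <- HSS. field. lra.
Qed.

Lemma dphi_c q t : -1 < q < 1 -> continuous (dphi q) t.
Proof.
  intros Hq. apply (@ex_derive_continuous R_AbsRing R_NormedModule).
  pose proof (Dpos q t Hq) as HD.
  pose proof (sqrt_lt_R0 _ HD) as HS.
  unfold dphi. auto_derive. fixD q t. repeat split; try lra.
  apply Rgt_not_eq. apply Rmult_lt_0_compat; auto.
Qed.

Lemma isdphi q : -1 < q < 1 -> is_RInt (dphi q) 0 (PI/2) 0.
Proof.
  intros Hq.
  assert (Hv : minus (phi q (PI/2)) (phi q 0) = 0).
  { unfold phi. rewrite cos_PI2, sin_0. unfold minus, plus, opp; simpl. toR. unfold Rdiv. ring. }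
  cut (is_RInt (dphi q) 0 (PI/2) (minus (phi q (PI/2)) (phi q 0))).
  { rewrite Hv. auto. }
  apply (is_RInt_derive (V:=R_CompleteNormedModule)).
  + intros; now apply phi_d.
  + intros; now apply dphi_c.
Qed.

Lemma derK q : 0 < q < 1 -> is_derive ellK q ((ellE q - (1 - q^2) * ellK q) / (q * (1 - q^2))).
Proof.
  intros Hq. unfold ellK at 1.
  apply (param (fun u t => / sqrt (1 - u^2 * sin t^2))
     (fun u t => u * sin t ^2 / ((1 - u^2 * sin t^2) * sqrt (1 - u^2 * sin t^2)))); auto.
  - intros; now apply dK_is.
  - intros; now apply dK_c.
  - intros; now apply exK.
  - replace ((ellE q - (1 - q^2) * ellK q) / (q * (1 - q^2))) with
      (1 * (/ (q * (1 - q^2)) * ellE q + (- / q) * ellK q) + (- q / (1 - q^2)) * 0)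
      by (field; split; nra).
    apply is_RInt_ext with (fun t => 1 * (/ (q * (1 - q^2)) * sqrt (1 - q^2 * sin t^2)
        + (- /q) * / sqrt (1 - q^2 * sin t^2)) + (- q / (1 - q^2)) * dphi q t).
    + intros t _. pose proof (Dpos q t ltac:(lra)) as HD.
      pose proof (sqrt_lt_R0 _ HD) as HS. pose proof (sqrt_sqrt _ (Rlt_le _ _ HD)) as HSS.
      rewrite Rmult_1_l. unfold dphi.
      toR. symmetry. apply idK; auto. pose proof (sin2_cos2 t) as Hsc. unfold Rsqr in Hsc. nra.
    + apply lin2; [apply lin2; [apply isE|apply isK]; lra|]. apply isdphi; lra.
Qed.

Lemma incr_of (g g' : R -> R) x y : x < y ->
  (forall c, x <= c <= y -> is_derive g c (g' c)) ->
  (forall c, x < c < y -> 0 < g' c) -> g x < g y.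
Proof.
  intros Hxy Hd Hp.
  destruct (MVT_cor2 g g' x y Hxy) as [c [Hc1 Hc2]].
  { intros c Hc. apply is_derive_Reals. auto. }
  pose proof (Hp c Hc2). nra.
Qed.

Lemma decr_of (g g' : R -> R) x y : x < y ->
  (forall c, x <= c <= y -> is_derive g c (g' c)) ->
  (forall c, x < c < y -> g' c < 0) -> g y < g x.
Proof.
  intros Hxy Hd Hp.
  destruct (MVT_cor2 g g' x y Hxy) as [c [Hc1 Hc2]].
  { intros c Hc. apply is_derive_Reals. auto. }
  pose proof (Hp c Hc2). nra.
Qed.

Lemma not_ext (D : R -> Prop) (g : R -> R) lo hi q : lo < q < hi ->
  (forall y, lo < y < hi -> D y) ->
  ((forall x y, lo < x -> x < y -> y < hi -> g x < g y) \/
   (forall x y, lo < x -> x < y -> y < hi -> g y < g x)) ->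
  ~ is_local_max D g q /\ ~ is_local_min D g q.
Proof.
  intros Hq HD Hm.
  assert (K : forall d, 0 < d -> exists y0 y1, lo < y0 < q /\ q < y1 < hi /\
             Rabs (y0 - q) < d /\ Rabs (y1 - q) < d).
  { intros d Hd. exists (q - Rmin d (q - lo) / 2), (q + Rmin d (hi - q) / 2).
    assert (0 < Rmin d (q - lo)) by (apply Rmin_glb_lt; lra).
    assert (0 < Rmin d (hi - q)) by (apply Rmin_glb_lt; lra).
    pose proof (Rmin_l d (q - lo)). pose proof (Rmin_r d (q - lo)).
    pose proof (Rmin_l d (hi - q)). pose proof (Rmin_r d (hi - q)).
    repeat split; try lra; apply Rabs_def1; lra. }
  split.
  - intros [_ [d [Hd H]]]. destruct (K d Hd) as [y0 [y1 [H0 [H1 [H2 H3]]]]].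
    pose proof (H y0 (HD y0 ltac:(lra)) H2). pose proof (H y1 (HD y1 ltac:(lra)) H3).
    destruct Hm as [Hm|Hm].
    + pose proof (Hm q y1 ltac:(lra) ltac:(lra) ltac:(lra)). lra.
    + pose proof (Hm y0 q ltac:(lra) ltac:(lra) ltac:(lra)). lra.
  - intros [_ [d [Hd H]]]. destruct (K d Hd) as [y0 [y1 [H0 [H1 [H2 H3]]]]].
    pose proof (H y0 (HD y0 ltac:(lra)) H2). pose proof (H y1 (HD y1 ltac:(lra)) H3).
    destruct Hm as [Hm|Hm].
    + pose proof (Hm y0 q ltac:(lra) ltac:(lra) ltac:(lra)). lra.
    + pose proof (Hm q y1 ltac:(lra) ltac:(lra) ltac:(lra)). lra.
Qed.

Lemma gK_der q : 0 < q < 1 ->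
  is_derive gK q (16 / (q * (1 - q ^ 2)) * (2 * ellE q - ellK q) * fK q).
Proof.
  intros Hq. pose proof (derE q Hq) as HE. pose proof (derK q Hq) as HK.
  unfold gK. auto_derive.
  - split; [eexists; exact HE|]. split; [eexists; exact HK|]. exact I.
  - replace (Derive (fun x => ellE x) q) with ((ellE q - ellK q) / q)
      by (symmetry; now apply is_derive_unique).
    replace (Derive (fun x => ellK x) q) with ((ellE q - (1 - q^2) * ellK q) / (q * (1 - q^2)))
      by (symmetry; now apply is_derive_unique).
    unfold fK. field. split; nra.
Qed.

Theorem lemma2p4 (qs qh : R)
  (Hdec : forall x y, 0 <= x -> x < y -> y < 1 ->
            2 * ellE y - ellK y < 2 * ellE x - ellK x)
  (Hqs : 0 < qs < 1) (Hqs0 : 2 * ellE qs - ellK qs = 0)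
  (Hqh : / sqrt 2 < qh < qs) (Hqh0 : fK qh = 0)
  (Hfpos : forall x, / sqrt 2 <= x < qh -> 0 < fK x)
  (Hfneg : forall x, qh < x < 1 -> fK x < 0) :
  (forall q, / sqrt 2 < q < 1 ->
     is_derive gK q (16 / (q * (1 - q ^ 2)) * (2 * ellE q - ellK q) * fK q)) /\
  (forall q, (is_local_max domg gK q \/ is_local_min domg gK q) <->
             (q = qh \/ q = qs)) /\
  is_local_max domg gK qh /\
  (forall q, is_local_max domg gK q -> q = qh) /\
  gK qs = 0 /\ is_local_min domg gK qs /\
  strictly_monotone_on (fun x => / sqrt 2 < x <= qh) gK /\
  strictly_monotone_on (fun x => qh <= x <= qs) gK /\
  strictly_monotone_on (fun x => qs <= x < 1) gK.
Proof.
  set (a := / sqrt 2) in *.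
  assert (Ha : 0 < a) by (apply Rinv_0_lt_compat, sqrt_lt_R0; lra).
  set (g' := fun q => 16 / (q * (1 - q ^ 2)) * (2 * ellE q - ellK q) * fK q).
  assert (Hd : forall q, a < q < 1 -> is_derive gK q (g' q)).
  { intros q Hq. apply gK_der. lra. }
  assert (Hc : forall q, a < q < 1 -> 0 < 16 / (q * (1 - q ^ 2))).
  { intros q Hq. apply Rdiv_lt_0_compat; [lra|]. apply Rmult_lt_0_compat; nra. }
  assert (Hhp : forall q, 0 <= q < qs -> 0 < 2 * ellE q - ellK q).
  { intros q Hq. rewrite <- Hqs0. apply Hdec; lra. }
  assert (Hhn : forall q, qs < q < 1 -> 2 * ellE q - ellK q < 0).
  { intros q Hq. rewrite <- Hqs0. apply Hdec; lra. }
  assert (inc1 : forall x y, a < x -> x < y -> y <= qh -> gK x < gK y).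
  { intros x y H1 H2 H3. apply (incr_of gK g'); auto.
    - intros c Hc'. apply Hd. lra.
    - intros c Hc'. unfold g'. pose proof (Hc c ltac:(lra)).
      pose proof (Hhp c ltac:(lra)). pose proof (Hfpos c ltac:(lra)).
      apply Rmult_lt_0_compat; auto. apply Rmult_lt_0_compat; auto. }
  assert (dec2 : forall x y, qh <= x -> x < y -> y <= qs -> gK y < gK x).
  { intros x y H1 H2 H3. apply (decr_of gK g'); auto.
    - intros c Hc'. apply Hd. lra.
    - intros c Hc'. unfold g'. pose proof (Hc c ltac:(lra)).
      pose proof (Hhp c ltac:(lra)). pose proof (Hfneg c ltac:(lra)).
      assert (0 < 16 / (c * (1 - c ^ 2)) * (2 * ellE c - ellK c))
        by (apply Rmult_lt_0_compat; auto). nra. }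
  assert (inc3 : forall x y, qs <= x -> x < y -> y < 1 -> gK x < gK y).
  { intros x y H1 H2 H3. apply (incr_of gK g'); auto.
    - intros c Hc'. apply Hd. lra.
    - intros c Hc'. unfold g'. pose proof (Hc c ltac:(lra)).
      pose proof (Hhn c ltac:(lra)). pose proof (Hfneg c ltac:(lra)).
      assert (16 / (c * (1 - c ^ 2)) * (2 * ellE c - ellK c) < 0) by nra. nra. }
  assert (Hmax : is_local_max domg gK qh).
  { split; [unfold domg; fold a; lra|].
    exists (Rmin (qh - a) (qs - qh)). split; [apply Rmin_glb_lt; lra|].
    intros y Hy Hr. unfold domg in Hy; fold a in Hy.
    pose proof (Rmin_l (qh - a) (qs - qh)). pose proof (Rmin_r (qh - a) (qs - qh)).
    apply Rabs_def2 in Hr.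
    destruct (Rtotal_order y qh) as [Hy2|[Hy2|Hy2]].
    - left. apply inc1; lra.
    - subst; lra.
    - left. apply dec2; lra. }
  assert (Hmin : is_local_min domg gK qs).
  { split; [unfold domg; fold a; lra|].
    exists (Rmin (qs - qh) (1 - qs)). split; [apply Rmin_glb_lt; lra|].
    intros y Hy Hr. unfold domg in Hy; fold a in Hy.
    pose proof (Rmin_l (qs - qh) (1 - qs)). pose proof (Rmin_r (qs - qh) (1 - qs)).
    apply Rabs_def2 in Hr.
    destruct (Rtotal_order y qs) as [Hy2|[Hy2|Hy2]].
    - left. apply dec2; lra.
    - subst; lra.
    - left. apply inc3; lra. }
  assert (Hiff : forall q, (is_local_max domg gK q \/ is_local_min domg gK q) <->
             (q = qh \/ q = qs)).
  { intros q. split.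
    - intros H. assert (Dq : domg q) by (destruct H as [[H _]|[H _]]; auto).
      unfold domg in Dq; fold a in Dq.
      destruct (Rtotal_order q qh) as [H1|[H1|H1]]; [|now left|].
      + exfalso. destruct (not_ext domg gK a qh q) as [N1 N2]; [lra| |left|].
        * intros y Hy; unfold domg; fold a; lra.
        * intros; apply inc1; lra.
        * tauto.
      + destruct (Rtotal_order q qs) as [H2|[H2|H2]]; [|now right|].
        * exfalso. destruct (not_ext domg gK qh qs q) as [N1 N2]; [lra| |right|].
          -- intros y Hy; unfold domg; fold a; lra.
          -- intros; apply dec2; lra.
          -- tauto.
        * exfalso. destruct (not_ext domg gK qs 1 q) as [N1 N2]; [lra| |left|].
          -- intros y Hy; unfold domg; fold a; lra.
          -- intros; apply inc3; lra.
          -- tauto.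
    - intros [H|H]; subst; auto. }
  split; [intros; apply Hd; auto|].
  split; [exact Hiff|].
  split; [exact Hmax|].
  split.
  { intros q Hq. destruct (proj1 (Hiff q) (or_introl Hq)) as [H|H]; auto.
    subst q. exfalso. destruct Hq as [_ [d [Hd0 H]]].
    set (y := qs + Rmin d (1 - qs) / 2).
    assert (0 < Rmin d (1 - qs)) by (apply Rmin_glb_lt; lra).
    pose proof (Rmin_l d (1 - qs)). pose proof (Rmin_r d (1 - qs)).
    assert (Hy1 : gK y <= gK qs).
    { apply H. unfold domg, y; fold a; lra. apply Rabs_def1; unfold y; lra. }
    assert (gK qs < gK y) by (apply inc3; unfold y; lra). lra. }
  split; [unfold gK; rewrite Hqs0; ring|].
  split; [exact Hmin|].
  split; [left; intros x y Hx Hy Hxy; apply inc1; lra|].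
  split; [right; intros x y Hx Hy Hxy; apply dec2; lra|].
  left; intros x y Hx Hy Hxy; apply inc3; lra.
Qed.
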